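(* Let $(J,k_1,\dots,k_J)$ be a permissible decomposition of $Q$ and $A\in I_{J,k_1,\dots,k_J}$. Then there is $\delta>0$ such that for every $B\in I_{J,k_1,\dots,k_J}$ with $\mathcal{G}(A,B)<\delta$, every geodesic $\gamma:[0,1]\to\mathbb{Q}_Q(\mathbb{R}^n)$ from $A$ to $B$ satisfies $\gamma(t)\in I_{J,k_1,\dots,k_J}$ for all $t\in[0,1]$.
   Context: $\mathbb{Q}_Q(\mathbb{R}^n)$ denotes the set of unordered $Q$-tuples of points of $\mathbb{R}^n$, written $\sum_{i=1}^Q[[a_i]]$ (two such sums are equal iff the tuples agree up to a permutation; $k[[a]]$ means $k$ copies of $a$), with metric $\mathcal{G}\big(\sum_i[[a_i]],\sum_i[[b_i]]\big)=\min_{\sigma}\big(\sum_{i}|a_i-b_{\sigma(i)}|^2\big)^{1/2}$ over permutations $\sigma$. A permissible decomposition of $Q$ is a tuple $(J,k_1,\dots,k_J)$ of positive integers with $k_1\le\dots\le k_J$ and $\sum_i k_i=Q$. Every $x$ can be written uniquely as $x=\sum_{i=1}^J k_i[[x_i]]$ with $x_1,\dots,x_J$ distinct and $k_1\le\dots\le k_J$; its signature is $S(x)=(J,k_1,\dots,k_J)$, and $I_{J,k_1,\dots,k_J}=\{x:S(x)=(J,k_1,\dots,k_J)\}$. A geodesic from $A$ to $B$ is a curve $\gamma:[0,1]\to\mathbb{Q}_Q(\mathbb{R}^n)$ with $\gamma(0)=A$, $\gamma(1)=B$ and $\mathcal{G}(\gamma(s),\gamma(t))=|t-s|\,\mathcal{G}(A,B)$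 for all $s,t$. *)

(* Defs.v *)
From HB Require Import structures.
From mathcomp Require Import all_boot all_order all_algebra all_fingroup.
From mathcomp Require Import reals.
Set Implicit Arguments. Unset Strict Implicit. Unset Printing Implicit Defensive.
Import Order.TTheory GRing.Theory Num.Theory.
Local Open Scope ring_scope.

(* Points of Q_Q(R^n) are represented by ordered Q-tuples of points of R^n
   (row vectors); all notions below are invariant under permutations of the
   tuple, so they are notions on the unordered Q-tuples. *)
Definition Qpt (R : realType) (Q n : nat) := 'I_Q -> 'rV[R]_n.

Definition sqnorm (R : realType) (n : nat) (v : 'rV[R]_n) : R :=
  \sum_(j < n) (v 0 j) ^+ 2.

Definition Qeq (R : realType) (Q n : nat) (x y : Qpt R Q n) : Prop :=
  exists s : 'S_Q, forall i, x i = y (s i).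

Definition Gcost (R : realType) (Q n : nat) (x y : Qpt R Q n) (s : 'S_Q) : R :=
  \sum_(i < Q) sqnorm (x i - y (s i)).

Definition Gdist (R : realType) (Q n : nat) (x y : Qpt R Q n) : R :=
  Num.sqrt (\big[Num.min/Gcost x y 1%g]_(s : 'S_Q) Gcost x y s).

(* signature S(x) = (J, k_1, ..., k_J), encoded as the nondecreasing list
   [:: k_1; ...; k_J] of multiplicities of the distinct points (J = its size) *)
Definition signature (R : realType) (Q n : nat) (x : Qpt R Q n) : seq nat :=
  sort leq [seq #|[set i : 'I_Q | x i == y]| | y <- undup [seq x i | i <- enum 'I_Q]].

(* permissible decomposition (J, k_1, ..., k_J) of Q, encoded as [:: k_1; ...; k_J] *)
Definition permissible (Q : nat) (ks : seq nat) : Prop :=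
  [/\ (0 < size ks)%N, all (fun k => 0 < k)%N ks, sorted leq ks & sumn ks = Q].

Definition inI (R : realType) (Q n : nat) (ks : seq nat) (x : Qpt R Q n) : Prop :=
  signature x = ks.

Definition geodesic (R : realType) (Q n : nat) (A B : Qpt R Q n)
  (g : R -> Qpt R Q n) : Prop :=
  [/\ Qeq (g 0) A, Qeq (g 1) B &
      forall s t, 0 <= s <= 1 -> 0 <= t <= 1 ->
        Gdist (g s) (g t) = `|t - s| * Gdist A B].

(* Main.v *)
Require Import Defs.
From HB Require Import structures.
From mathcomp Require Import all_boot all_order all_algebra all_fingroup.
From mathcomp Require Import reals ring lra.
Import Order.TTheory GRing.Theory Num.Theory.
Local Open Scope ring_scope.
Set Implicit Arguments. Unset Strict Implicit.
Section Sig.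
Variables (R : realType) (Q n : nat).
Implicit Types x y : Qpt R Q n.

Lemma sig_perm x (s : 'S_Q) : signature (fun i => x (s i)) = signature x.
Proof.
rewrite /signature; apply/perm_sortP; [exact: leq_total|exact: leq_trans|exact: anti_leq|].
have E : forall v, #|[set i : 'I_Q | x (s i) == v]| =
          #|[set i : 'I_Q | x i == v]|.
  move=> v; rewrite -[RHS](card_preimset _ (@perm_inj _ s)).
  by apply: eq_card => i; rewrite !inE.
rewrite (eq_map E); apply: perm_map; apply: perm_undup => v; apply/mapP/mapP => -[i _ ->].
  by exists (s i); rewrite ?mem_enum.
by exists ((s^-1)%g i); rewrite ?mem_enum // permKV.
Qed.

Lemma undup_map_inj_in (T1 T2 : eqType) (f : T1 -> T2) (s : seq T1) :
  {in s &, injective f} -> undup (map f s) = map f (undup s).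
Proof.
elim: s => //= a s IH inj.
have inj' : {in s &, injective f}.
  by move=> u v us vs; apply: inj; rewrite inE ?us ?vs orbT.
have -> : (f a \in map f s) = (a \in s).
  apply/mapP/idP => [[b bs fab]|]; last by move=> ?; exists a.
  by rewrite (inj a b) // ?inE ?eqxx ?bs ?orbT.
by case: ifP => _ /=; rewrite IH.
Qed.

Lemma sig_ker x y : (forall i j, (x i == x j) = (y i == y j)) ->
  signature x = signature y.
Proof.
move=> H; rewrite /signature.
pose e := enum 'I_Q.
pose h v := nth 0 (map y e) (index v (map x e)).
have hx i : h (x i) = y i.
  have Hi : x i \in map x e by apply: map_f; rewrite mem_enum.
  rewrite /h (nth_map i) -?(size_map x) ?index_mem //.
  apply/eqP; rewrite -H.
  by rewrite -(nth_map i (x i)) -?(size_map x) ?index_mem // nth_index.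
have -> : [seq y i | i <- enum 'I_Q] = map h [seq x i | i <- enum 'I_Q].
  by rewrite -[RHS]map_comp; apply: eq_map => i /=; rewrite hx.
rewrite (@undup_map_inj_in _ _ h); last first.
  move=> u v /mapP[i _ ->] /mapP[j _ ->]; rewrite !hx => /eqP.
  by rewrite -H => /eqP.
rewrite -[in RHS]map_comp; congr (sort _ _); apply/eq_in_map => v.
rewrite mem_undup => /mapP[k _ ->] /=; rewrite hx.
by apply: eq_card => i; rewrite !inE H.
Qed.

Lemma size_sig x : size (signature x) = size (undup (map x (enum 'I_Q))).
Proof. by rewrite /signature size_sort size_map. Qed.

Lemma uniq_map_inj (T1 T2 : eqType) (f : T1 -> T2) (s : seq T1) :
  uniq (map f s) -> {in s &, injective f}.
Proof.
elim: s => //= a s IH /andP[fa us] u v; rewrite !inE.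
case/orP=> [/eqP->|us']; case/orP=> [/eqP->|vs'] //.
- by move=> E; move: fa; rewrite E map_f.
- by move=> E; move: fa; rewrite -E map_f.
- exact: IH.
Qed.

Lemma ker_count x y : (forall i j, y i = y j -> x i = x j) ->
  size (undup (map y (enum 'I_Q))) = size (undup (map x (enum 'I_Q))) ->
  forall i j, x i = x j -> y i = y j.
Proof.
move=> Hyx Hs i j Hx.
pose e := enum 'I_Q.
pose h v := nth 0 (map x e) (index v (map y e)).
have hy k : h (y k) = x k.
  have Hk : y k \in map y e by apply: map_f; rewrite mem_enum.
  rewrite /h (nth_map k) -?(size_map y) ?index_mem //.
  apply: Hyx.
  by rewrite -(nth_map k (y k)) -?(size_map y) ?index_mem // nth_index.
have U : uniq (map h (undup (map y e))).
  apply: (@leq_size_uniq _ (undup (map x e))); first exact: undup_uniq.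
    move=> v; rewrite mem_undup => /mapP[k _ ->]; rewrite -hy.
    by apply: map_f; rewrite mem_undup map_f // mem_enum.
  by rewrite size_map Hs.
apply: (uniq_map_inj U); rewrite ?mem_undup ?map_f ?mem_enum //.
by rewrite !hy.
Qed.

End Sig.
Section Norm.
Variables (R : realType) (Q n : nat).
Implicit Types (x y : Qpt R Q n) (s : 'S_Q).

Lemma sqnorm_ge0 (v : 'rV[R]_n) : 0 <= sqnorm v.
Proof. by apply: sumr_ge0 => j _; rewrite sqr_ge0. Qed.

Lemma sqnorm_eq0 (v : 'rV[R]_n) : sqnorm v = 0 -> v = 0.
Proof.
move=> /eqP; rewrite psumr_eq0 => [/allP H|j _]; last by rewrite sqr_ge0.
apply/matrixP => i j; rewrite ord1 mxE.
by move: (H j (mem_index_enum _)); rewrite sqrf_eq0 => /eqP.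
Qed.

Lemma sqnormB_le (u v : 'rV[R]_n) : sqnorm (u - v) <= 2 * sqnorm u + 2 * sqnorm v.
Proof.
rewrite /sqnorm !mulr_sumr -big_split /=; apply: ler_sum => j _.
rewrite !mxE -subr_ge0 (_ : _ - _ = (u 0 j + v 0 j) ^+ 2); [exact: sqr_ge0|ring].
Qed.

Lemma sqnormZ (t : R) (v : 'rV[R]_n) : sqnorm (t *: v) = t ^+ 2 * sqnorm v.
Proof. by rewrite /sqnorm mulr_sumr; apply: eq_bigr => j _; rewrite mxE exprMn. Qed.

Lemma sqnormN (v : 'rV[R]_n) : sqnorm (- v) = sqnorm v.
Proof. by rewrite /sqnorm; apply: eq_bigr => j _; rewrite mxE sqrrN. Qed.

Definition Gmin (x y : Qpt R Q n) := \big[Num.min/Gcost x y 1%g]_(s : 'S_Q) Gcost x y s.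

Lemma Gcost_ge0 x y s : 0 <= Gcost x y s.
Proof. by apply: sumr_ge0 => i _; exact: sqnorm_ge0. Qed.

Lemma Gmin_le x y s : Gmin x y <= Gcost x y s.
Proof. exact: bigmin_le. Qed.

Lemma Gmin_ex x y : exists s, Gmin x y = Gcost x y s.
Proof.
rewrite /Gmin; apply: (big_ind (fun v => exists s, v = Gcost x y s)).
- by exists 1%g.
- move=> a b [s ->] [s' ->]; rewrite /Num.min.
  by case: ifP => _; [exists s|exists s'].
- by move=> s _; exists s.
Qed.

Lemma Gmin_ge0 x y : 0 <= Gmin x y.
Proof. by have [s ->] := Gmin_ex x y; exact: Gcost_ge0. Qed.

Lemma GdistE x y : Gdist x y ^+ 2 = Gmin x y.
Proof. by rewrite /Gdist sqr_sqrtr // Gmin_ge0. Qed.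


Lemma sumlin (al be : R) (F G : 'I_Q -> 'I_n -> R) :
  \sum_i \sum_j (al * F i j + be * G i j) ^+ 2 =
  al ^+ 2 * (\sum_i \sum_j F i j ^+ 2) + (2 * al * be) * (\sum_i \sum_j (F i j * G i j))
  + be ^+ 2 * (\sum_i \sum_j G i j ^+ 2).
Proof.
rewrite !mulr_sumr -!big_split; apply: eq_bigr => i _.
rewrite !mulr_sumr -!big_split; apply: eq_bigr => j _ /=; ring.
Qed.

Lemma sum2_eq0 (F : 'I_Q -> 'I_n -> R) : \sum_i \sum_j F i j ^+ 2 <= 0 ->
  forall i j, F i j = 0.
Proof.
move=> H.
have H0 : \sum_i \sum_j F i j ^+ 2 = 0.
  apply/eqP; rewrite eq_le H; apply: sumr_ge0 => i _; apply: sumr_ge0 => j _.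
  exact: sqr_ge0.
move: H0 => /eqP; rewrite psumr_eq0 => [/allP Hi i j|i _]; last first.
  by apply: sumr_ge0 => j _; exact: sqr_ge0.
move: (Hi i (mem_index_enum _)) => /=; rewrite psumr_eq0 => [/allP Hj|j0 _].
  by move: (Hj j (mem_index_enum _)) => /=; rewrite sqrf_eq0 => /eqP.
exact: sqr_ge0.
Qed.

Lemma Gcost2 x y s : Gcost x y s = \sum_i \sum_j ((x i 0 j - y (s i) 0 j) ^+ 2).
Proof. by apply: eq_bigr => i _; apply: eq_bigr => j _; rewrite !mxE. Qed.

Lemma geo_key a b c (t D2 : R) : 0 <= t <= 1 ->
  Gmin a c = t ^+ 2 * D2 -> Gmin c b = (1 - t) ^+ 2 * D2 -> Gmin a b = D2 ->
  exists s, exists sg, Gcost a b sg = D2 /\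
     forall i, c (s i) = (1 - t) *: a i + t *: b (sg i).
Proof.
move=> /andP[t0 t1] Hac Hcb Hab.
have [s Hs] := Gmin_ex a c; have [s' Hs'] := Gmin_ex c b.
pose sg := (s * s')%g.
exists s, sg.
pose U i j := a i 0 j - c (s i) 0 j.
pose V i j := c (s i) 0 j - b (sg i) 0 j.
have EP : \sum_i \sum_j U i j ^+ 2 = t ^+ 2 * D2 by rewrite -Hac Hs Gcost2.
have EQ : \sum_i \sum_j V i j ^+ 2 = (1 - t) ^+ 2 * D2.
  rewrite -Hcb Hs' Gcost2 [RHS](reindex_inj (@perm_inj _ s)).
  by apply: eq_bigr => i _; apply: eq_bigr => j _; rewrite /V /sg permM.
have EW : Gcost a b sg = \sum_i \sum_j (1 * U i j + 1 * V i j) ^+ 2.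
  by rewrite Gcost2; apply: eq_bigr => i _; apply: eq_bigr => j _; rewrite /U /V; congr (_ ^+ 2); ring.
have LW : D2 <= Gcost a b sg by rewrite -Hab Gmin_le.
have EZ := sumlin (1 - t) (- t) U V.
have EW' := sumlin 1 1 U V.
rewrite -EW in EW'.
set X := \sum_i \sum_j (U i j * V i j) in EZ EW'.
set Z := \sum_i \sum_j ((1 - t) * U i j + - t * V i j) ^+ 2 in EZ.
have Z0 : Z <= 0.
  have h1 : 0 <= t * (1 - t) by nra.
  have h2 : 0 <= t * (1 - t) * (Gcost a b sg - D2).
    by apply: mulr_ge0 => //; rewrite subr_ge0.
  rewrite EZ EP EQ; rewrite EW' EP EQ in h2. nra.
have Hz := sum2_eq0 Z0.
have HU i j : U i j = t * (1 * U i j + 1 * V i j).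
  have h := Hz i j; apply/eqP; rewrite -subr_eq0; apply/eqP; rewrite -h; ring.
split.
  have EU := sumlin t 0 (fun i j => 1 * U i j + 1 * V i j) U.
  have EV := sumlin (1 - t) 0 (fun i j => 1 * U i j + 1 * V i j) U.
  rewrite -EW in EU EV.
  have EU' : \sum_i \sum_j (t * (1 * U i j + 1 * V i j) + 0 * U i j) ^+ 2 = t ^+ 2 * D2.
    rewrite -EP; apply: eq_bigr => i _; apply: eq_bigr => j _; rewrite [in RHS]HU; ring.
  have EV' : \sum_i \sum_j ((1 - t) * (1 * U i j + 1 * V i j) + 0 * U i j) ^+ 2 = (1 - t) ^+ 2 * D2.
    rewrite -EQ; apply: eq_bigr => i _; apply: eq_bigr => j _.
    have hv : V i j = (1 - t) * (1 * U i j + 1 * V i j).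
      by transitivity ((1 * U i j + 1 * V i j) - U i j); [ring| rewrite {2}HU; ring].
    rewrite [in RHS]hv; ring.
  rewrite EU' in EU; rewrite EV' in EV.
  nra.
move=> i; apply/matrixP => k j; rewrite ord1 !mxE.
have := HU i j; rewrite /U /V; nra.
Qed.

End Norm.
Unset Implicit Arguments. Set Strict Implicit.
Theorem theorem3p12 (R : realType) (Q n : nat) (ks : seq nat) (A : Qpt R Q n) :
  permissible Q ks -> inI ks A ->
  exists2 delta : R, 0 < delta &
    forall B : Qpt R Q n, inI ks B -> Gdist A B < delta ->
    forall g : R -> Qpt R Q n, geodesic A B g ->
    forall t : R, 0 <= t <= 1 -> inI ks (g t).
Proof.
move=> _ HA.
pose m := \big[Num.min/1]_(p : 'I_Q * 'I_Q | A p.1 != A p.2) sqnorm (A p.1 - A p.2).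
have m0 : 0 < m.
  apply: (big_ind (fun v => 0 < v)) => //.
    by move=> u v u0 v0; rewrite lt_min u0 v0.
  move=> p Hp; rewrite lt_neqAle sqnorm_ge0 andbT eq_sym.
  apply/negP => /eqP /sqnorm_eq0 /eqP; rewrite subr_eq0; apply/negP; exact: Hp.
have mle i j : A i != A j -> m <= sqnorm (A i - A j).
  by move=> H; apply: (bigmin_le_cond _ (j := (i, j))).
exists (Num.min 1 (m / 8)); first by rewrite lt_min ltr01 divr_gt0.
move=> B HB HD g [[pa Ha] [pb Hb] Hg] t Ht.
set D := Gdist A B in HD Hg.
have D0 : 0 <= D by apply: sqrtr_ge0.
have t0 : 0 <= t by case/andP: Ht.
have t1 : t <= 1 by case/andP: Ht.
have I0 : 0 <= (0:R) <= 1 by apply/andP; split; lra.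
have I1 : 0 <= (1:R) <= 1 by apply/andP; split; lra.
have Hac : Gmin (g 0) (g t) = t ^+ 2 * D ^+ 2.
  by rewrite -GdistE Hg // subr0 ger0_norm // exprMn.
have Hcb : Gmin (g t) (g 1) = (1 - t) ^+ 2 * D ^+ 2.
  by rewrite -GdistE Hg // ger0_norm ?subr_ge0 // exprMn.
have Hab : Gmin (g 0) (g 1) = D ^+ 2.
  by rewrite -GdistE Hg // subr0 normr1 mul1r.
have [s [sg [Hcost Hc]]] := geo_key Ht Hac Hcb Hab.
set a := g 0 in Ha Hcost Hc; set b := g 1 in Hb Hcost Hc.
have close i : sqnorm (a i - b (sg i)) <= D ^+ 2.
  rewrite -Hcost /Gcost (bigD1 i) //= lerDl; apply: sumr_ge0 => k _.
  exact: sqnorm_ge0.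
move: HD; rewrite lt_min => /andP[HD1 HD2].
have Dsmall : D ^+ 2 < m / 8 by nra.
have sepA i j : a i != a j -> m <= sqnorm (a i - a j).
  by rewrite !Ha => H; apply: mle.
have sepw (r : R) i j : 0 <= r <= 1 -> a i != a j ->
    (1 - r) *: a i + r *: b (sg i) != (1 - r) *: a j + r *: b (sg j).
  move=> /andP[r0 r1] neq; apply/negP => /eqP E.
  have E2 : a i - a j = r *: ((a i - b (sg i)) - (a j - b (sg j))).
    apply/matrixP => k l; move/matrixP: E => /(_ k l); rewrite !mxE => E.
    apply/eqP; rewrite -subr_eq0; apply/eqP.
    transitivity (((1 - r) * a i k l + r * b (sg i) k l) -
                  ((1 - r) * a j k l + r * b (sg j) k l)); first ring.
    by rewrite E subrr.
  have := sepA i j neq; rewrite E2 sqnormZ.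
  have := sqnormB_le (a i - b (sg i)) (a j - b (sg j)).
  have := close i; have := close j.
  have := sqnorm_ge0 (a i - b (sg i) - (a j - b (sg j))).
  set S := sqnorm _; move=> S0 cj ci SB.
  have : 0 <= (1 - r ^+ 2) * S by apply: mulr_ge0 => //; nra.
  nra.
pose y := fun i => b (sg i).
have Hy i j : y i = y j -> a i = a j.
  move=> E; apply/eqP; apply/negPn/negP => /(sepw 1 i j I1).
  by rewrite subrr !scale0r !add0r !scale1r -/(y i) -/(y j) E eqxx.
have sigy : signature y = ks.
  rewrite -HB -(sig_perm B (sg * pb)%g); apply: sig_ker => i j.
  by rewrite /y !Hb !permM.
have siga : signature a = ks.
  rewrite -HA -(sig_perm A pa); apply: sig_ker => i j.
  by rewrite !Ha.
have Hay := ker_count Hy ltac:(by rewrite -!size_sig sigy siga).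
rewrite /inI -(sig_perm (g t) s) -siga; apply: sig_ker => i j.
rewrite !Hc; case: (eqVneq (a i) (a j)) => E.
  by rewrite -/(y i) -/(y j) E (Hay i j E) eqxx.
by apply/negbTE; apply: sepw.
Qed.
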